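(* Let $k\ge1$ and let $\phi=(\phi_1,\dots,\phi_k):\mathbb{D}^k\to\overline{\mathbb{D}}^k$ be an analytic map such that $C_\phi f=f\circ\phi$ maps $A^+(\mathbb{T}^k)$ into itself. Then $C_\phi:A^+(\mathbb{T}^k)\to A^+(\mathbb{T}^k)$ is an isometry if and only if there exist a square matrix $A=(a_{ij})_{1\le i,j\le k}$ with $a_{ij}\in\mathbb{N}_0$ and $\det A\ne0$, and complex numbers $\epsilon_1,\dots,\epsilon_k$ of modulus $1$, such that $$\phi_i(z)=\epsilon_iz_1^{a_{i1}}\cdots z_k^{a_{ik}},\qquad1\le i\le k,\ z=(z_1,\dots,z_k)\in\mathbb{D}^k.$$
   Context: $A^+(\mathbb{T}^k)$ is the algebra of functions $f(z)=\sum_{\alpha\in\mathbb{N}_0^k}a_\alpha z^\alpha$ on $\overline{\mathbb{D}}^k$ with $\|f\|_{A^+(\mathbb{T}^k)}=\sum|a_\alpha|<\infty$, a Banach algebra under pointwise multiplication. $\mathbb{N}_0=\{0,1,2,\dots\}$. *)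

(* Defs.v *)
From mathcomp Require Import all_boot all_algebra.
From mathcomp Require Export complex.
From mathcomp Require Export reals.
Import GRing.Theory Num.Theory.

Set Implicit Arguments.
Unset Strict Implicit.
Unset Printing Implicit Defensive.

Local Open Scope ring_scope.

Section Aplus.
Variables (R : realType) (k : nat).
Local Notation C := R[i].

Definition mono (z : 'I_k -> C) (al : 'I_k -> nat) : C :=
  \prod_(j < k) z j ^+ al j.

Definition boxsum (N : nat) (F : ('I_k -> nat) -> C) : C :=
  \sum_(al : {ffun 'I_k -> 'I_N}) F (fun j => nat_of_ord (al j)).

Definition abs_summable (F : ('I_k -> nat) -> C) : Prop :=
  exists M : C, forall N, boxsum N (fun al => `|F al|) <= M.

(* the family F is absolutely summable over N_0^k with sum S
   (for absolutely summable families the sum does not depend on the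
   exhaustion, so exhausting by boxes is no loss) *)
Definition has_sum (F : ('I_k -> nat) -> C) (S : C) : Prop :=
  abs_summable F /\
  forall e : C, 0 < e -> exists N0 : nat, forall N, (N0 <= N)%N ->
    `|boxsum N F - S| < e.

Definition open_polydisc (z : 'I_k -> C) : Prop := forall j, `|z j| < 1.
Definition closed_polydisc (z : 'I_k -> C) : Prop := forall j, `|z j| <= 1.

Definition Aplus_rep (a : ('I_k -> nat) -> C) (f : ('I_k -> C) -> C) : Prop :=
  abs_summable a /\
  forall z, closed_polydisc z -> has_sum (fun al => a al * mono z al) (f z).

(* f belongs to A^+(T^k) (f is only relevant on the closed polydisc) *)
Definition in_Aplus (f : ('I_k -> C) -> C) : Prop := exists a, Aplus_rep a f.

Definition Aplus_norm_is (f : ('I_k -> C) -> C) (S : C) : Prop :=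
  exists a, Aplus_rep a f /\ has_sum (fun al => `|a al|) S.

Definition analytic_on_polydisc (g : ('I_k -> C) -> C) : Prop :=
  forall w, open_polydisc w ->
    exists r : C, 0 < r /\ exists c : ('I_k -> nat) -> C,
      forall z, (forall j, `|z j - w j| < r) ->
        has_sum (fun al => c al * mono (fun j => z j - w j) al) (g z).

Definition Cphi_maps_Aplus (phi : ('I_k -> C) -> ('I_k -> C)) : Prop :=
  forall f, in_Aplus f ->
    exists g, in_Aplus g /\ forall z, open_polydisc z -> g z = f (phi z).

Definition Cphi_isometry (phi : ('I_k -> C) -> ('I_k -> C)) : Prop :=
  forall f g (S : C), in_Aplus f -> in_Aplus g ->
    (forall z, open_polydisc z -> g z = f (phi z)) ->
    Aplus_norm_is f S -> Aplus_norm_is g S.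

End Aplus.

(* Main.v *)
Require Import Defs.
From Stdlib Require Import ClassicalEpsilon FunctionalExtensionality Classical.
From mathcomp Require Import all_boot all_algebra.
From mathcomp Require Import complex reals.
From mathcomp Require Import zify lra ring.
Import GRing.Theory Num.Theory.
Import order.Order.TTheory.
Local Open Scope ring_scope.
Local Open Scope complex_scope.

Set Implicit Arguments.
Unset Strict Implicit.
Unset Printing Implicit Defensive.


Section Infra.
Variable R : realType.
Local Notation C := R[i].

Definition nr (x : C) : R := complex.Re `|x|.

Lemma normE (x : C) : `|x| = (nr x)%:C.
Proof. by rewrite /nr RRe_real ?normr_real. Qed.

Lemma nr_ge0 x : 0 <= nr x.
Proof. by rewrite -ler0c -normE. Qed.

Lemma nrD x y : nr (x + y) <= nr x + nr y.
Proof. by rewrite -lecR rmorphD /= -!normE ler_normD. Qed.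

Lemma nrM x y : nr (x * y) = nr x * nr y.
Proof. by apply: (@complexI R); rewrite rmorphM /= -!normE normrM. Qed.

Lemma nrN x : nr (- x) = nr x.
Proof. by rewrite /nr normrN. Qed.

Lemma nr0 : nr 0 = 0.
Proof. by rewrite /nr normr0. Qed.

Lemma nr1 : nr 1 = 1.
Proof. by rewrite /nr normr1. Qed.

Lemma nr_eq0 x : (nr x == 0) = (x == 0).
Proof. by rewrite -(inj_eq (@complexI R)) -normE normr_eq0. Qed.

Lemma nrB x y : nr (x - y) = nr (y - x).
Proof. by rewrite -nrN opprB. Qed.

Lemma nr_sum (I : Type) (s : seq I) (P : pred I) (F : I -> C) :
  nr (\sum_(i <- s | P i) F i) <= \sum_(i <- s | P i) nr (F i).
Proof.
rewrite -lecR rmorph_sum /= -normE.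
rewrite [X in _ <= X](eq_bigr (fun i => `|F i|)).
  exact: ler_norm_sum.
by move=> i _; rewrite normE.
Qed.

Lemma nr_real (a : R) : nr a%:C = `|a|.
Proof.
apply: (@complexI R); rewrite -normE.
have [a0|a0] := lerP 0 a.
  by rewrite !ger0_norm // ler0c.
by rewrite !ltr0_norm ?ltcR // rmorphN.
Qed.

Lemma nr_ltP x e : (`|x| < e%:C) = (nr x < e).
Proof. by rewrite normE ltcR. Qed.

Lemma nr_leP x e : (`|x| <= e%:C) = (nr x <= e).
Proof. by rewrite normE lecR. Qed.

Lemma posC (e : C) : 0 < e -> e = (complex.Re e)%:C /\ 0 < complex.Re e.
Proof.
move=> e0; have er : e \is Num.real by rewrite gtr0_real.
by split; rewrite ?RRe_real // -ltcR RRe_real.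
Qed.

Lemma nrB_le x y : nr x - nr y <= nr (x - y).
Proof. have := nrD (x - y) y; rewrite subrK; lra. Qed.

Lemma nr_sum_ge0 (I : Type) (s : seq I) (P : pred I) (F : I -> C) :
  0 <= \sum_(i <- s | P i) nr (F i).
Proof. by apply: sumr_ge0 => i _; apply: nr_ge0. Qed.

Variable k : nat.
Local Notation mi := {ffun 'I_k -> nat}.

Definition emb N (a : {ffun 'I_k -> 'I_N}) : mi := [ffun j => (a j : nat)].
Definition box N : seq mi := map (@emb N) (enum {ffun 'I_k -> 'I_N}).

Lemma mem_box N (x : mi) : (x \in box N) = [forall j, x j < N]%N.
Proof.
apply/idP/idP.
  by case/mapP=> a _ ->; apply/forallP => j; rewrite ffunE.
move/forallP=> H.
apply/mapP; exists [ffun j => Ordinal (H j)]; first by rewrite mem_enum.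
by apply/ffunP => j; rewrite !ffunE.
Qed.

Lemma mem_boxP N (x : mi) : reflect (forall j, (x j < N)%N) (x \in box N).
Proof. by rewrite mem_box; apply: forallP. Qed.

Lemma box_uniq N : uniq (box N).
Proof.
rewrite map_inj_uniq ?enum_uniq // => a b /ffunP H.
apply/ffunP => j; apply: val_inj; have := H j; by rewrite !ffunE.
Qed.

Lemma boxsumE N (F : ('I_k -> nat) -> C) :
  boxsum N F = \sum_(x <- box N) F x.
Proof.
rewrite /boxsum /box big_map big_enum /=.
apply: eq_bigr => a _; congr F; apply: functional_extensionality => j.
by rewrite ffunE.
Qed.

Lemma box_mono N M (x : mi) : (N <= M)%N -> x \in box N -> x \in box M.
Proof.
move=> NM /mem_boxP H; apply/mem_boxP => j; exact: leq_trans (H j) NM.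
Qed.

Lemma box_seq (s : seq mi) : exists M, forall x, x \in s -> x \in box M.
Proof.
elim: s => [|y s [M HM]]; first by exists 0%N.
exists (maxn M (\sum_j y j).+1) => x; rewrite inE => /orP[/eqP->|/HM].
  apply/mem_boxP => j; rewrite leq_max; apply/orP; right.
  by rewrite ltnS (bigD1 j) //= leq_addr.
by apply: box_mono; rewrite leq_maxl.
Qed.

Lemma permsum (V : nmodType) (s t : seq mi) (F : mi -> V) :
  uniq s -> uniq t -> (forall x, x \in t -> x \in s) ->
  \sum_(x <- s | x \in t) F x = \sum_(x <- t) F x.
Proof.
move=> us ut ts; rewrite -big_filter; apply: perm_big; apply: uniq_perm.
- exact: filter_uniq.
- exact: ut.
move=> x; rewrite mem_filter; apply/andP/idP => [[]//|xt]; split => //.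
exact: ts.
Qed.

Lemma box_mono_sum (F : mi -> R) N M : (N <= M)%N -> (forall x, 0 <= F x) ->
  \sum_(x <- box N) F x <= \sum_(x <- box M) F x.
Proof.
move=> NM F0.
rewrite -(permsum F (box_uniq M) (box_uniq N)); last by move=> x; apply: box_mono.
rewrite [X in _ <= X](bigID (fun x => x \in box N)) /= lerDl.
by apply: sumr_ge0.
Qed.

End Infra.
Arguments box_uniq {k} N.


Section Lim.
Variable R : realType.
Local Notation C := R[i].

Definition rlim (u : nat -> R) (l : R) := forall e : R, 0 < e ->
  exists N0, forall N, (N0 <= N)%N -> `|u N - l| < e.
Definition clim (u : nat -> C) (l : C) := forall e : R, 0 < e ->
  exists N0, forall N, (N0 <= N)%N -> nr (u N - l) < e.

Lemma small0 (x : C) : (forall e : R, 0 < e -> nr x < e) -> x = 0.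
Proof.
move=> H; apply/eqP; rewrite -nr_eq0; apply/eqP.
have h0 := nr_ge0 x.
case: (lerP (nr x) 0) => hx; first by lra.
have := H _ hx; lra.
Qed.

Lemma rsmall0 (x : R) : (forall e : R, 0 < e -> `|x| < e) -> x = 0.
Proof.
move=> H; apply/eqP; rewrite -normr_eq0; apply/eqP.
have h0 := normr_ge0 x.
case: (lerP `|x| 0) => hx; first by lra.
have := H _ hx; lra.
Qed.

Lemma clim_unique u l l' : clim u l -> clim u l' -> l = l'.
Proof.
move=> H H'; apply/eqP; rewrite -subr_eq0; apply/eqP; apply: small0 => e e0.
have e2 : 0 < e / 2 by lra.
have [N1 HN1] := H _ e2; have [N2 HN2] := H' _ e2.
have := HN1 (maxn N1 N2) (leq_maxl _ _); have := HN2 (maxn N1 N2) (leq_maxr _ _).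
have := nrD (l - u (maxn N1 N2)) (u (maxn N1 N2) - l').
rewrite [nr (l - _)]nrB.
have -> : l - u (maxn N1 N2) + (u (maxn N1 N2) - l') = l - l' by ring.
lra.
Qed.

Lemma rlim_unique u l l' : rlim u l -> rlim u l' -> l = l'.
Proof.
move=> H H'; apply/eqP; rewrite -subr_eq0; apply/eqP; apply: rsmall0 => e e0.
have e2 : 0 < e / 2 by lra.
have [N1 HN1] := H _ e2; have [N2 HN2] := H' _ e2.
have := HN1 (maxn N1 N2) (leq_maxl _ _); have := HN2 (maxn N1 N2) (leq_maxr _ _).
have := ler_normD (l - u (maxn N1 N2)) (u (maxn N1 N2) - l').
rewrite [`|l - _|]distrC.
have -> : l - u (maxn N1 N2) + (u (maxn N1 N2) - l') = l - l' by ring.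
lra.
Qed.

Lemma rlim_le u v a b : rlim u a -> rlim v b ->
  (exists N0, forall N, (N0 <= N)%N -> u N <= v N) -> a <= b.
Proof.
move=> Hu Hv [N0 H0]; case: (lerP a b) => // ba.
have e0 : 0 < (a - b) / 2 by lra.
have [N1 H1] := Hu _ e0; have [N2 H2] := Hv _ e0.
pose N := maxn N0 (maxn N1 N2).
have := H0 N (leq_maxl _ _).
have := H1 N (leq_trans (leq_maxl _ _) (leq_maxr _ _)).
have := H2 N (leq_trans (leq_maxr _ _) (leq_maxr _ _)).
rewrite !ltr_norml; lra.
Qed.

Lemma rlim_const c : rlim (fun _ => c) c.
Proof. by move=> e e0; exists 0%N => N _; rewrite subrr normr0. Qed.

Lemma clim_add u v a b : clim u a -> clim v b -> clim (fun N => u N + v N) (a + b).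
Proof.
move=> Hu Hv e e0; have e2 : 0 < e / 2 by lra.
have [N1 H1] := Hu _ e2; have [N2 H2] := Hv _ e2.
exists (maxn N1 N2) => N HN.
have := H1 N (leq_trans (leq_maxl _ _) HN); have := H2 N (leq_trans (leq_maxr _ _) HN).
have := nrD (u N - a) (v N - b).
have -> : u N - a + (v N - b) = u N + v N - (a + b) by ring.
lra.
Qed.

Lemma clim_scale c u a : clim u a -> clim (fun N => c * u N) (c * a).
Proof.
move=> Hu e e0.
have c0 : 0 < nr c + 1 by have := nr_ge0 c; lra.
have [N1 H1] := Hu (e / (nr c + 1)) (divr_gt0 e0 c0).
exists N1 => N HN; rewrite -mulrBr nrM.
have := H1 N HN; have := nr_ge0 c; have := nr_ge0 (u N - a) => h1 h2 h3.
have : nr c * nr (u N - a) <= (nr c + 1) * nr (u N - a) by nra.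
have : (nr c + 1) * nr (u N - a) < e.
  by rewrite mulrC -ltr_pdivlMr.
lra.
Qed.

Lemma clim_opp u a : clim u a -> clim (fun N => - u N) (- a).
Proof.
move=> Hu e e0; have [N1 H1] := Hu e e0; exists N1 => N HN.
by rewrite -opprD nrN; apply: H1.
Qed.

Lemma clim_sub u v a b : clim u a -> clim v b -> clim (fun N => u N - v N) (a - b).
Proof. by move=> Hu Hv; apply: clim_add => //; apply: clim_opp. Qed.

Lemma clim_const c : clim (fun _ => c) c.
Proof. by move=> e e0; exists 0%N => N _; rewrite subrr nr0. Qed.

Lemma clim_ev u v a : clim u a -> (exists N0, forall N, (N0 <= N)%N -> u N = v N) ->
  clim v a.
Proof.
move=> Hu [N0 H0] e e0; have [N1 H1] := Hu e e0.
exists (maxn N0 N1) => N HN; rewrite -H0; first by apply: H1; apply: leq_trans HN; apply: leq_maxr.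
by apply: leq_trans HN; apply: leq_maxl.
Qed.

Lemma clim_sum (I : Type) (r : seq I) (u : I -> nat -> C) (a : I -> C) :
  (forall i, clim (u i) (a i)) ->
  clim (fun N => \sum_(i <- r) u i N) (\sum_(i <- r) a i).
Proof.
move=> H; elim: r => [|i r IH].
  rewrite big_nil; apply: (clim_ev (clim_const 0)); exists 0%N => N _; by rewrite big_nil.
rewrite big_cons; apply: (clim_ev (clim_add (H i) IH)); exists 0%N => N _; by rewrite big_cons.
Qed.

Lemma clim_squeeze u v w a : clim u a -> rlim w 0 ->
  (forall N, nr (v N - u N) <= w N) -> clim v a.
Proof.
move=> Hu Hw Hb e e0; have e2 : 0 < e / 2 by lra.
have [N1 H1] := Hu _ e2; have [N2 H2] := Hw _ e2.
exists (maxn N1 N2) => N HN.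
have := H1 N (leq_trans (leq_maxl _ _) HN); have := H2 N (leq_trans (leq_maxr _ _) HN).
have := Hb N; have := nrD (v N - u N) (u N - a).
have -> : v N - u N + (u N - a) = v N - a by ring.
rewrite subr0 => h1 h2; rewrite ltr_norml; lra.
Qed.

Lemma clim_half u a : clim u a -> clim (fun N => u (N %/ 2)%N) a.
Proof.
move=> Hu e e0; have [N1 H1] := Hu e e0; exists (N1 * 2)%N => N HN.
apply: H1; rewrite leq_divRL //.
Qed.

Lemma clim_bounded u a : clim u a -> exists B : R, forall N, nr (u N) <= B.
Proof.
move=> Hu; have [N1 H1] := Hu 1 ltr01.
exists (nr a + 1 + \sum_(i < N1) nr (u i)) => N.
case: (ltnP N N1) => hN.
  have h1 : 0 <= nr a + 1 by have := nr_ge0 a; lra.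
  rewrite (bigD1 (Ordinal hN)) //=.
  have : 0 <= \sum_(i < N1 | i != Ordinal hN) nr (u i) by apply: sumr_ge0 => *; exact: nr_ge0.
  lra.
have := H1 N hN; have := nrD (u N - a) a; rewrite subrK.
have : 0 <= \sum_(i < N1) nr (u i) by apply: sumr_ge0 => *; exact: nr_ge0.
lra.
Qed.

Lemma clim_mul u v a b : clim u a -> clim v b -> clim (fun N => u N * v N) (a * b).
Proof.
move=> Hu Hv.
have [B HB] := clim_bounded Hu.
pose w N := (B + nr b + 1) * (nr (u N - a) + nr (v N - b)).
apply: (@clim_squeeze (fun N => a * b) _ w).
- exact: clim_const.
- move=> e e0.
  have hB : 0 < B + nr b + 1.
    have := HB 0%N; have := nr_ge0 (u 0%N); have := nr_ge0 b; lra.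
  have e2 : 0 < e / (B + nr b + 1) / 2.
    by apply: divr_gt0 => //; apply: divr_gt0.
  have [N1 H1] := Hu _ e2; have [N2 H2] := Hv _ e2.
  exists (maxn N1 N2) => N HN; rewrite subr0 /w.
  have := H1 N (leq_trans (leq_maxl _ _) HN); have := H2 N (leq_trans (leq_maxr _ _) HN).
  have := nr_ge0 (u N - a); have := nr_ge0 (v N - b) => g1 g2 h1 h2.
  rewrite ger0_norm; last by apply: mulr_ge0; lra.
  rewrite mulrC -ltr_pdivlMr //; lra.
- move=> N; rewrite /w.
  have -> : u N * v N - a * b = u N * (v N - b) + b * (u N - a) by ring.
  have := nrD (u N * (v N - b)) (b * (u N - a)); rewrite !nrM.
  have := HB N; have := nr_ge0 (u N); have := nr_ge0 b;
  have := nr_ge0 (u N - a); have := nr_ge0 (v N - b) => *.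
  nra.
Qed.

End Lim.


Section Summ.
Variable R : realType.
Local Notation C := R[i].
Variable k : nat.
Local Notation mi := {ffun 'I_k -> nat}.
Local Notation box := (@box k).

Definition bnd (F : mi -> C) := exists M : R, forall N, \sum_(x <- box N) nr (F x) <= M.
Definition hs (F : mi -> C) (S : C) :=
  bnd F /\ clim (fun N => \sum_(x <- box N) F x) S.

Lemma nr_norm (x : C) : nr `|x| = nr x.
Proof. by rewrite {1}normE nr_real ger0_norm // nr_ge0. Qed.

Lemma sum_normE (s : seq mi) (F : mi -> C) :
  \sum_(x <- s) `|F x| = (\sum_(x <- s) nr (F x))%:C.
Proof. by rewrite rmorph_sum /=; apply: eq_bigr => x _; rewrite normE. Qed.

Lemma abs_summableP (F : ('I_k -> nat) -> C) :
  abs_summable F <-> bnd (fun x : mi => F x).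
Proof.
split.
  case=> M HM; exists (complex.Re M) => N; have := HM N.
  rewrite boxsumE sum_normE lecE => /andP[_]; done.
case=> M HM; exists M%:C => N; rewrite boxsumE sum_normE lecR; exact: HM.
Qed.

Lemma has_sumP (F : ('I_k -> nat) -> C) S :
  has_sum F S <-> hs (fun x : mi => F x) S.
Proof.
split.
  case=> /abs_summableP Hb Hl; split => // e e0.
  have e0' : 0 < e%:C by rewrite ltcR.
  have [N0 H0] := Hl _ e0'.
  by exists N0 => N HN; rewrite -nr_ltP -boxsumE; apply: H0.
case=> Hb Hl; split; first by apply/abs_summableP.
move=> e /posC [-> e0]; have [N0 H0] := Hl _ e0.
by exists N0 => N HN; rewrite nr_ltP boxsumE; apply: H0.
Qed.

Lemma hs_norm (a : mi -> C) (s : R) :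
  hs (fun x => `|a x|) s%:C <-> bnd a /\ rlim (fun N => \sum_(x <- box N) nr (a x)) s.
Proof.
have E N : nr (\sum_(x <- box N) `|a x| - s%:C) = `|\sum_(x <- box N) nr (a x) - s|.
  by rewrite sum_normE -rmorphB nr_real.
split.
  case=> [[M HM] Hl]; split.
    by exists M => N; have := HM N; under eq_bigr do rewrite nr_norm.
  by move=> e e0; have [N0 H0] := Hl e e0; exists N0 => N HN; rewrite -E; apply: H0.
case=> [[M HM] Hl]; split.
  by exists M => N; under eq_bigr do rewrite nr_norm; apply: HM.
by move=> e e0; have [N0 H0] := Hl e e0; exists N0 => N HN; rewrite E; apply: H0.
Qed.

Lemma cauchy (G : mi -> R) : (forall x, 0 <= G x) ->
  (exists M, forall N, \sum_(x <- box N) G x <= M) ->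
  forall e, 0 < e -> exists N0, forall N,
    \sum_(x <- box N) G x <= \sum_(x <- box N0) G x + e.
Proof.
move=> G0 [M HM] e e0.
have S0 N : 0 <= \sum_(x <- box N) G x by apply: sumr_ge0.
apply: NNPP => H.
have H' : forall N0, exists N, \sum_(x <- box N0) G x + e < \sum_(x <- box N) G x.
  move=> N0; apply: NNPP => H2; apply: H; exists N0 => N.
  case: (lerP (\sum_(x <- box N) G x) (\sum_(x <- box N0) G x + e)) => // h.
  by exfalso; apply: H2; exists N.
have Hn : forall n : nat, exists N, n%:R * e <= \sum_(x <- box N) G x.
  elim=> [|n [N HN]]; first by exists 0%N; rewrite mul0r.
  have [N' HN'] := H' N; exists N'; rewrite -addn1 natrD; lra.
have hM : 0 <= M by have := HM 0%N; have := S0 0%N; lra.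
have [n hn] : exists n : nat, M / e < n%:R.
  by eexists; apply: archi_boundP; apply: divr_ge0 => //; apply: ltW.
have [N HN] := Hn n; have := HM N.
move: hn; rewrite ltr_pdivrMr // => hn; lra.
Qed.

Lemma tail (G : mi -> R) : (forall x, 0 <= G x) ->
  (exists M, forall N, \sum_(x <- box N) G x <= M) ->
  forall e, 0 < e -> exists N0, forall s, uniq s ->
    (forall x, x \in s -> x \notin box N0) -> \sum_(x <- s) G x <= e.
Proof.
move=> G0 HM e e0; have [N0 HN0] := cauchy G0 HM e0.
exists N0 => s us Hs; have [M' HM'] := box_seq s.
pose L := maxn M' N0.
have ut : uniq (box N0 ++ s).
  rewrite cat_uniq box_uniq us /= andbT; apply/hasPn => x xs; exact: Hs.
have : \sum_(x <- box N0 ++ s) G x <= \sum_(x <- box L) G x.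
  rewrite -(permsum G (box_uniq L) ut).
    rewrite [X in _ <= X](bigID (fun x => x \in box N0 ++ s)) /= lerDl.
    by apply: sumr_ge0.
  move=> x; rewrite mem_cat => /orP[]; first by apply: box_mono; apply: leq_maxr.
  by move/HM'; apply: box_mono; apply: leq_maxl.
rewrite big_cat /=; have := HN0 L; lra.
Qed.

Lemma hs_super F S : hs F S -> forall e, 0 < e -> exists N0, forall s, uniq s ->
  (forall x, x \in box N0 -> x \in s) -> nr (\sum_(x <- s) F x - S) < e.
Proof.
move=> [[M HM] Hl] e e0; have e2 : 0 < e / 2 by lra.
have [N1 H1] := Hl _ e2.
have [N2 H2] := tail (fun x => nr_ge0 (F x)) (ex_intro _ M HM) e2.
exists (maxn N1 N2) => s us Hs.
rewrite (bigID (fun x => x \in box (maxn N1 N2))) /= permsum //; last exact: box_uniq.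
have h1 := H1 (maxn N1 N2) (leq_maxl _ _).
have h2 : \sum_(x <- s | x \notin box (maxn N1 N2)) nr (F x) <= e / 2.
  rewrite -big_filter; apply: H2; first exact: filter_uniq.
  move=> x; rewrite mem_filter => /andP[hx _]; apply: contra hx.
  by apply: box_mono; apply: leq_maxr.
have h3 := nr_sum (s) (fun x => x \notin box (maxn N1 N2)) F.
have := nrD (\sum_(x <- box (maxn N1 N2)) F x - S) (\sum_(x <- s | x \notin box (maxn N1 N2)) F x).
rewrite addrAC; lra.
Qed.

Lemma hs_unique F S S' : hs F S -> hs F S' -> S = S'.
Proof. by move=> [_ H] [_ H']; apply: clim_unique H H'. Qed.

Lemma bnd_add F G : bnd F -> bnd G -> bnd (fun x => F x + G x).
Proof.
move=> [M HM] [M' HM']; exists (M + M') => N.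
apply: le_trans (_ : \sum_(x <- box N) (nr (F x) + nr (G x)) <= _).
  by apply: ler_sum => x _; apply: nrD.
by rewrite big_split /=; apply: lerD.
Qed.

Lemma bnd_scale c F : bnd F -> bnd (fun x => c * F x).
Proof.
move=> [M HM]; exists (nr c * M) => N.
under eq_bigr do rewrite nrM; rewrite -mulr_sumr.
by apply: ler_wpM2l; [apply: nr_ge0 | apply: HM].
Qed.

Lemma hs_add F G S T : hs F S -> hs G T -> hs (fun x => F x + G x) (S + T).
Proof.
move=> [bF lF] [bG lG]; split; first exact: bnd_add.
apply: (clim_ev (clim_add lF lG)); exists 0%N => N _; by rewrite big_split.
Qed.

Lemma hs_scale c F S : hs F S -> hs (fun x => c * F x) (c * S).
Proof.
move=> [bF lF]; split; first exact: bnd_scale.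
apply: (clim_ev (clim_scale c lF)); exists 0%N => N _; by rewrite mulr_sumr.
Qed.

Lemma hs_opp F S : hs F S -> hs (fun x => - F x) (- S).
Proof.
move=> H; have := hs_scale (-1) H; rewrite mulN1r.
by have -> : (fun x => -1 * F x) = (fun x => - F x)
  by apply: functional_extensionality => x; rewrite mulN1r.
Qed.

Lemma hs_sub F G S T : hs F S -> hs G T -> hs (fun x => F x - G x) (S - T).
Proof. by move=> HF HG; apply: hs_add => //; apply: hs_opp. Qed.

Lemma sum_fin (V : nmodType) (F : mi -> V) M N :
  (forall x, x \notin box M -> F x = 0) -> (M <= N)%N ->
  \sum_(x <- box N) F x = \sum_(x <- box M) F x.
Proof.
move=> HF MN; rewrite [LHS](bigID (fun x => x \in box M)) /= permsum ?box_uniq //.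
  rewrite [X in _ + X = _]big1 ?addr0 //; by move=> x /HF.
by move=> x; apply: box_mono.
Qed.

Lemma hs_fin F M : (forall x, x \notin box M -> F x = 0) ->
  hs F (\sum_(x <- box M) F x).
Proof.
move=> HF; split.
  exists (\sum_(x <- box M) nr (F x)) => N.
  have h1 := @box_mono_sum _ _ (fun x => nr (F x)) _ _ (leq_maxl N M) (fun x => nr_ge0 (F x)).
  rewrite (@sum_fin _ (fun x => nr (F x)) M (maxn N M)) ?leq_maxr // in h1.
  by move=> x /HF ->; rewrite nr0.
apply: (clim_ev (clim_const _)); exists M => N HN.
by rewrite (sum_fin HF HN).
Qed.

Lemma sum_pt (V : nmodType) (y : mi) (c : V) M : y \in box M ->
  \sum_(x <- box M) (if x == y then c else 0) = c.
Proof.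
move=> yM; rewrite -big_mkcond /= -big_filter filter_pred1_uniq ?box_uniq //.
by rewrite big_seq1.
Qed.

Lemma box_self (y : mi) : y \in box (\sum_j y j).+1.
Proof. by apply/mem_boxP => j; rewrite ltnS (bigD1 j) //= leq_addr. Qed.

Lemma hs_pt (y : mi) (c : C) : hs (fun x => if x == y then c else 0) c.
Proof.
have := @hs_fin (fun x => if x == y then c else 0) (\sum_j y j).+1.
rewrite sum_pt ?box_self //; apply.
by move=> x; case: eqP => // -> ; rewrite box_self.
Qed.

Lemma rlim_box_le (G : mi -> R) s : (forall x, 0 <= G x) ->
  rlim (fun N => \sum_(x <- box N) G x) s -> forall N, \sum_(x <- box N) G x <= s.
Proof.
move=> G0 Hl N; apply: (rlim_le (rlim_const _) Hl).
by exists N => N' HN; apply: box_mono_sum.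
Qed.

End Summ.


Section Uniq.
Variable R : realType.
Local Notation C := R[i].
Variable k : nat.
Local Notation mi := {ffun 'I_k -> nat}.
Local Notation box := (@box k).
Local Notation hs := (@hs R k).
Local Notation bnd := (@bnd R k).

Lemma nr_prod (I : Type) (s : seq I) (F : I -> C) :
  nr (\prod_(i <- s) F i) = \prod_(i <- s) nr (F i).
Proof.
elim: s => [|i s IH]; first by rewrite !big_nil nr1.
by rewrite !big_cons nrM IH.
Qed.

Lemma nrX (x : C) n : nr (x ^+ n) = nr x ^+ n.
Proof. by elim: n => [|n IH]; rewrite ?expr0 ?nr1 // !exprS nrM IH. Qed.

Lemma nr_lt1 (x : C) : (`|x| < 1) = (nr x < 1).
Proof. by rewrite -nr_ltP. Qed.

Lemma nr_le1 (x : C) : (`|x| <= 1) = (nr x <= 1).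
Proof. by rewrite -nr_leP. Qed.

Lemma mono_le1 (z : 'I_k -> C) (x : mi) : (forall j, nr (z j) <= 1) ->
  nr (mono z x) <= 1.
Proof.
move=> H; rewrite /mono nr_prod; apply: prodr_ile1 => j _.
rewrite nrX exprn_ge0 ?nr_ge0 //=; apply: exprn_ile1; [exact: nr_ge0 | exact: H].
Qed.

Lemma mono_add (z : 'I_k -> C) (x y : mi) : mono z (x + y) = mono z x * mono z y.
Proof.
by rewrite /mono -big_split /=; apply: eq_bigr => j _; rewrite ffunE exprD.
Qed.

Definition upd (z : 'I_k -> C) (j0 : 'I_k) (w : C) := fun j => if j == j0 then w else z j.

Lemma mono_upd (z : 'I_k -> C) j0 w (x : mi) : z j0 = 1 ->
  mono (upd z j0 w) x = w ^+ x j0 * mono z x.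
Proof.
move=> z1; rewrite /mono (bigD1 j0) // [in RHS](bigD1 j0) //= /upd eqxx z1 expr1n mul1r.
congr (_ * _); apply: eq_bigr => j /negPf ->; done.
Qed.

Lemma bnd_le (F G : mi -> C) : bnd G -> (forall x, nr (F x) <= nr (G x)) -> bnd F.
Proof.
move=> [M HM] H; exists M => N; apply: le_trans (HM N); apply: ler_sum => x _; exact: H.
Qed.

Lemma bnd_ge0 (F : mi -> C) : bnd F -> exists K, 0 <= K /\ forall N, \sum_(x <- box N) nr (F x) <= K.
Proof.
move=> [M HM]; exists M; split => //; apply: le_trans (HM 0%N); exact: nr_sum_ge0.
Qed.

Lemma GL (c : mi -> C) (e : mi -> nat) : bnd c ->
  (forall t : R, 0 < t -> t < 1 -> hs (fun x => c x * t%:C ^+ e x) 0) ->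
  forall n, hs (fun x => if e x == n then c x else 0) 0.
Proof.
move=> Hc Ht; have [K [K0 HK]] := bnd_ge0 Hc.
elim/ltn_ind => n IH; split.
  eapply bnd_le; first exact: Hc. move=> x; case: ifP => _; by rewrite ?nr0 ?nr_ge0.
move=> eps eps0.
pose t := eps / (eps + 2 * K + 2).
have den0 : 0 < eps + 2 * K + 2 by lra.
have t0 : 0 < t by apply: divr_gt0.
have t1 : t < 1 by rewrite /t ltr_pdivrMr //; lra.
have tK : t * K <= eps / 2.
  rewrite /t mulrAC ler_pdivrMr // mulrAC ler_pdivlMr //; nra.
have tn0 : 0 < t ^+ n by apply: exprn_gt0.
pose B m N := \sum_(x <- box N) (if e x == m then c x else 0).
have [_ Hl] := Ht t t0 t1.
have Hm : forall m, (m < n)%N -> clim (B m) 0 by move=> m /IH [].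
pose D N := \sum_(x <- box N) c x * t%:C ^+ e x - \sum_(m < n) t%:C ^+ m * B m N.
have HD : clim D 0.
  have H' : forall m : 'I_n, clim (fun N => t%:C ^+ m * B m N) 0.
    move=> m; have := clim_scale (t%:C ^+ m) (Hm m (ltn_ord m)); by rewrite mulr0.
  have := clim_sub Hl (clim_sum (index_enum 'I_n) H'); by rewrite big1 // subr0.
pose T N := \sum_(x <- box N) (if (n < e x)%N then c x * t%:C ^+ e x else 0).
have tX m : nr (t%:C ^+ m) = t ^+ m.
  by rewrite nrX nr_real ger0_norm //; apply: ltW.
have HT N : nr (T N) <= t ^+ n.+1 * K.
  apply: le_trans (nr_sum _ _ _) _.
  apply: le_trans (_ : \sum_(x <- box N) t ^+ n.+1 * nr (c x) <= _); last first.
    by rewrite -mulr_sumr; apply: ler_wpM2l; [apply: exprn_ge0; apply: ltW | apply: HK].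
  apply: ler_sum => x _; case: ltnP => h; last first.
    by rewrite nr0; apply: mulr_ge0; [apply: exprn_ge0; apply: ltW | apply: nr_ge0].
  rewrite nrM tX mulrC; apply: ler_wpM2r; first exact: nr_ge0.
  by apply: ler_wiXn2l => //; apply: ltW.
have Hid N : t%:C ^+ n * B n N = D N - T N.
  rewrite /D /T /B.
  have pt x : c x * t%:C ^+ e x = \sum_(m < n) t%:C ^+ m * (if e x == m then c x else 0)
      + t%:C ^+ n * (if e x == n then c x else 0)
      + (if (n < e x)%N then c x * t%:C ^+ e x else 0).
    case: (ltngtP (e x) n) => h.
    - rewrite (bigD1 (Ordinal h)) //= eqxx big1 ?addr0.
        by rewrite mulr0 addr0 mulrC.
      move=> m /eqP hm; case: eqP => hm'; last by rewrite mulr0.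
      by exfalso; apply: hm; apply: val_inj; rewrite /= hm'.
    - rewrite big1 ?add0r; last first.
        move=> m _; case: eqP => hm; last by rewrite mulr0.
        exfalso; have := ltn_ord m; rewrite -hm.
        by move=> /ltn_trans /(_ h); rewrite ltnn.
      by rewrite mulr0 add0r.
    - rewrite big1 ?add0r; last first.
        move=> m _; case: eqP => hm; last by rewrite mulr0.
        by exfalso; have := ltn_ord m; rewrite -hm h ltnn.
      by rewrite ?addr0 ?h mulrC.
  rewrite (eq_bigr _ (fun x _ => pt x)) !big_split /= exchange_big /=.
  rewrite -mulr_sumr.
  have -> : \sum_(j < n) \sum_(i <- box N) t%:C ^+ j * (if e i == j then c i else 0)
       = \sum_(m < n) t%:C ^+ m * \sum_(x <- box N) (if e x == m then c x else 0).
    by apply: eq_bigr => m _; rewrite mulr_sumr.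
  ring.
have e2 : 0 < t ^+ n * (eps / 2) by apply: mulr_gt0 => //; lra.
have [N0 HN0] := HD _ e2.
exists N0 => N HN; rewrite subr0.
have h1 : nr (t%:C ^+ n * B n N) <= nr (D N) + nr (T N).
  by rewrite Hid; apply: le_trans (nrD _ _) _; rewrite nrN.
rewrite nrM tX in h1.
have := HN0 N HN; rewrite subr0 => h2.
have := HT N; rewrite exprS => h3.
have h4 : t ^+ n * nr (B n N) < t ^+ n * (eps / 2 + t * K).
  nra.
rewrite ltr_pM2l // in h4; lra.
Qed.



Lemma forall_ltS m (hm : (m < k)%N) (P : 'I_k -> bool) :
  [forall j : 'I_k, (j < m.+1)%N ==> P j] =
  [forall j : 'I_k, (j < m)%N ==> P j] && P (Ordinal hm).
Proof.
apply/forallP/andP.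
  move=> H; split.
    by apply/forallP => j; apply/implyP => hj; have := H j; rewrite ltnS ltnW.
  by have := H (Ordinal hm); rewrite /= ltnSn.
move=> [/forallP H1 H2] j; apply/implyP; rewrite ltnS leq_eqVlt => /orP[/eqP hj|hj].
  by have -> : j = Ordinal hm by apply: val_inj.
by have := H1 j; rewrite hj.
Qed.

Lemma claim (d : mi -> C) : bnd d ->
  (forall z : 'I_k -> C, (forall j, nr (z j) < 1) -> hs (fun x => d x * mono z x) 0) ->
  forall m, (m <= k)%N -> forall (y : mi) (z : 'I_k -> C),
    (forall j : 'I_k, (j < m)%N -> z j = 1) ->
    (forall j : 'I_k, (m <= j)%N -> nr (z j) < 1) ->
    hs (fun x => (if [forall j : 'I_k, (j < m)%N ==> (x j == y j)] then d x else 0) * mono z x) 0.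
Proof.
move=> Hd H; elim=> [|m IH] hm y z z1 zlt.
  have -> : (fun x : mi => (if [forall j : 'I_k, (j < 0)%N ==> (x j == y j)] then d x else 0) * mono z x)
      = (fun x => d x * mono z x).
    by apply: functional_extensionality => x; have -> : [forall j : 'I_k, (j < 0)%N ==> (x j == y j)] = true by apply/forallP.
  by apply: H => j; apply: zlt.
have hm' : (m < k)%N by [].
pose jm := Ordinal hm'.
pose c (x : mi) := (if [forall j : 'I_k, (j < m)%N ==> (x j == y j)] then d x else 0) * mono z x.
have zle j : nr (z j) <= 1.
  case: (ltnP j m.+1) => hj; first by rewrite z1 // nr1.
  by apply: ltW; apply: zlt.
have Hc : bnd c.
  eapply bnd_le; first exact: Hd.
  move=> x; rewrite /c nrM.
  have := mono_le1 x zle; have := nr_ge0 (mono z x).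
  case: ifP => _; last by move=> *; rewrite nr0 mul0r nr_ge0.
  have := nr_ge0 (d x); nra.
have zjm : z jm = 1 by apply: z1; rewrite /= ltnSn.
have Ht : forall t : R, 0 < t -> t < 1 -> hs (fun x => c x * t%:C ^+ x jm) 0.
  move=> t t0 t1.
  have := IH (ltnW hm) y (upd z jm t%:C).
  have -> : (fun x : mi => (if [forall j : 'I_k, (j < m)%N ==> (x j == y j)] then d x else 0) *
                mono (upd z jm t%:C) x) = (fun x => c x * t%:C ^+ x jm).
    by apply: functional_extensionality => x; rewrite mono_upd // /c; ring.
  apply.
    move=> j hj; rewrite /upd; case: eqP => hj'; first by rewrite hj' /= ltnn in hj.
    by apply: z1; rewrite ltnS ltnW.
  move=> j hj; rewrite /upd; case: eqP => hj'; first by rewrite nr_real ger0_norm ?ltW.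
  apply: zlt; rewrite leq_eqVlt in hj; case/orP: hj => // /eqP hj.
  by exfalso; apply: hj'; apply: val_inj.
have := GL Hc Ht (y jm).
have -> : (fun x : mi => if x jm == y jm then c x else 0) =
   (fun x : mi => (if [forall j : 'I_k, (j < m.+1)%N ==> (x j == y j)] then d x else 0) * mono z x).
  apply: functional_extensionality => x; rewrite (forall_ltS hm') /c.
  by case: (x jm == y jm); case: [forall _, _]; rewrite ?mul0r ?andbT ?andbF.
done.
Qed.

Lemma uniq0 (d : mi -> C) : bnd d ->
  (forall z : 'I_k -> C, (forall j, nr (z j) < 1) -> hs (fun x => d x * mono z x) 0) ->
  forall y, d y = 0.
Proof.
move=> Hd H y.
have := claim Hd H (leqnn k) y (z := fun _ => 1) (fun _ _ => erefl).
have -> : (fun x : mi => (if [forall j : 'I_k, (j < k)%N ==> (x j == y j)] then d x else 0) *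
     mono (fun=> 1) x) = (fun x => if x == y then d y else 0).
  apply: functional_extensionality => x.
  have -> : mono (fun _ => 1 : C) x = 1 by rewrite /mono big1 // => j _; rewrite expr1n.
  rewrite mulr1.
  have -> : [forall j : 'I_k, (j < k)%N ==> (x j == y j)] = (x == y).
    apply/forallP/eqP => [Hj|->]; last by move=> j; rewrite eqxx implybT.
    by apply/ffunP => j; have := Hj j; rewrite ltn_ord /= => /eqP.
  by case: eqP => // ->.
move=> h; apply: (hs_unique (hs_pt y (d y))); apply: h => j.
by rewrite leqNgt ltn_ord.
Qed.

Lemma coef_unique (a b : mi -> C) (f : ('I_k -> C) -> C) : bnd a -> bnd b ->
  (forall z : 'I_k -> C, (forall j, nr (z j) < 1) -> hs (fun x => a x * mono z x) (f z)) ->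
  (forall z : 'I_k -> C, (forall j, nr (z j) < 1) -> hs (fun x => b x * mono z x) (f z)) ->
  forall x, a x = b x.
Proof.
move=> Ha Hb HA HB x; apply/eqP; rewrite -subr_eq0; apply/eqP.
apply: (uniq0 (d := fun x => a x - b x)) => [|z hz].
  apply: bnd_add => //; eapply bnd_le; first exact: Hb.
  by move=> y; rewrite nrN.
have := hs_sub (HA z hz) (HB z hz); rewrite subrr.
by have -> : (fun x => a x * mono z x - b x * mono z x) = (fun x => (a x - b x) * mono z x)
  by apply: functional_extensionality => y; rewrite mulrBl.
Qed.

End Uniq.


Section Conv.
Variable k : nat.
Local Notation mi := {ffun 'I_k -> nat}.
Local Notation box := (@box k).

Definition le_mi (x y : mi) := [forall j, x j <= y j]%N.
Definition sub_mi (y x : mi) : mi := [ffun j => y j - x j]%N.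
Definition dom (y : mi) := box (\sum_j y j).+1.

Lemma sumeq (V : nmodType) (s1 s2 : seq mi) (P : pred mi) (F : mi -> V) :
  uniq s1 -> uniq s2 -> (forall x, P x -> (x \in s1) = (x \in s2)) ->
  \sum_(x <- s1 | P x) F x = \sum_(x <- s2 | P x) F x.
Proof.
move=> u1 u2 H; rewrite -big_filter -[RHS]big_filter; apply: perm_big.
apply: uniq_perm; try exact: filter_uniq.
move=> x; rewrite !mem_filter; case Px: (P x) => //=; exact: H.
Qed.

Lemma le_mi_box (x y : mi) N : le_mi x y -> y \in box N -> x \in box N.
Proof.
move=> /forallP H /mem_boxP Hy; apply/mem_boxP => j; exact: leq_ltn_trans (H j) (Hy j).
Qed.

Lemma le_mi_dom (x y : mi) : le_mi x y -> x \in dom y.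
Proof. move=> H; apply: le_mi_box H _; exact: box_self. Qed.

Lemma add_subK (x y : mi) : le_mi x y -> x + sub_mi y x = y.
Proof.
move=> /forallP H; apply/ffunP => j; rewrite /sub_mi !ffunE; apply: subnKC; exact: H.
Qed.

Lemma addK_mi (x w : mi) : sub_mi (x + w) x = w.
Proof. by apply/ffunP => j; rewrite /sub_mi !ffunE addKn. Qed.

Lemma le_mi_add (x w : mi) : le_mi x (x + w).
Proof. by apply/forallP => j; rewrite ffunE leq_addr. Qed.

Lemma conv_reindex (V : nmodType) (h : mi -> mi -> V) N :
  \sum_(y <- box N) \sum_(x <- dom y | le_mi x y) h x (sub_mi y x)
  = \sum_(x <- box N) \sum_(w <- box N | x + w \in box N) h x w.
Proof.
rewrite big_seq.
rewrite (eq_bigr (fun y => \sum_(x <- box N | le_mi x y) h x (sub_mi y x))); last first.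
  move=> y yN; apply: sumeq; try exact: box_uniq.
  by move=> x hx; rewrite le_mi_dom // (le_mi_box hx yN).
rewrite -big_seq.
under eq_bigr do rewrite big_mkcond.
rewrite exchange_big /=; apply: eq_bigr => x _; rewrite -big_mkcond /=.
rewrite -big_filter.
transitivity (\sum_(y <- map (fun w => x + w) [seq w <- box N | x + w \in box N]) h x (sub_mi y x)); last first.
  by rewrite big_map big_filter; apply: eq_bigr => w _; rewrite addK_mi.
apply: perm_big; apply: uniq_perm.
- by apply: filter_uniq; apply: box_uniq.
- rewrite map_inj_uniq; first by apply: filter_uniq; apply: box_uniq.
  move=> w1 w2 /ffunP H; apply/ffunP => j; have := H j; rewrite !ffunE; exact: addnI.
move=> y; rewrite mem_filter; apply/andP/mapP.
  move=> [hxy yN]; exists (sub_mi y x); last by rewrite add_subK.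
  rewrite mem_filter add_subK // yN /=.
  apply/mem_boxP => j; rewrite ffunE; apply: leq_ltn_trans (leq_subr _ _) _.
  by move/mem_boxP: yN; apply.
move=> [w]; rewrite mem_filter => /andP[xwN _] ->; split => //; exact: le_mi_add.
Qed.

Variable R : realType.
Local Notation C := R[i].
Local Notation hs := (@hs R k).
Local Notation bnd := (@bnd R k).

Definition conv (p q : mi -> C) (y : mi) :=
  \sum_(x <- dom y | le_mi x y) p x * q (sub_mi y x).

Lemma rlim_clim (u : nat -> R) l : rlim u l <-> clim (fun N => (u N)%:C) l%:C.
Proof.
split => H e e0; have [N0 H0] := H e e0; exists N0 => N HN; have := H0 N HN.
  by rewrite -rmorphB nr_real.
by rewrite -rmorphB nr_real.
Qed.

Lemma conv_bound (p q : mi -> C) N :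
  \sum_(y <- box N) nr (conv p q y) <=
  \sum_(x <- box N) \sum_(w <- box N | x + w \in box N) nr (p x) * nr (q w).
Proof.
rewrite -(conv_reindex (fun x w => nr (p x) * nr (q w))).
apply: ler_sum => y _; apply: le_trans (nr_sum _ _ _) _.
by apply: ler_sum => x _; rewrite nrM.
Qed.

Lemma double_le (F G : mi -> R) N : (forall x, 0 <= F x) -> (forall x, 0 <= G x) ->
  \sum_(x <- box N) \sum_(w <- box N | x + w \in box N) F x * G w <=
  (\sum_(x <- box N) F x) * (\sum_(w <- box N) G w).
Proof.
move=> F0 G0; rewrite mulr_suml; apply: ler_sum => x _; rewrite mulr_sumr.
rewrite [X in _ <= X](bigID (fun w => x + w \in box N)) /= lerDl.
by apply: sumr_ge0 => w _; apply: mulr_ge0.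
Qed.

Lemma prod_ind (V : comPzRingType) (F G : mi -> V) M N : (M <= N)%N ->
  (\sum_(x <- box M) F x) * (\sum_(w <- box M) G w) =
  \sum_(x <- box N) \sum_(w <- box N) (if (x \in box M) && (w \in box M) then F x * G w else 0).
Proof.
move=> MN; rewrite mulr_suml -(permsum _ (box_uniq N) (box_uniq M)); last first.
  by move=> x; apply: box_mono.
rewrite big_mkcond; apply: eq_bigr => x _; case: (x \in box M) => /=; last first.
  by rewrite big1.
rewrite mulr_sumr -(permsum _ (box_uniq N) (box_uniq M)); last first.
  by move=> w; apply: box_mono.
by rewrite big_mkcond.
Qed.

Lemma nr_sumB (s : seq mi) (F G : mi -> C) :
  nr (\sum_(x <- s) F x - \sum_(x <- s) G x) <= \sum_(x <- s) nr (F x - G x).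
Proof. rewrite -sumrB; exact: nr_sum. Qed.

Lemma cauchy_prod (p q : mi -> C) (z : 'I_k -> C) P Q sp sq :
  (forall j, nr (z j) <= 1) ->
  hs (fun x => p x * mono z x) P -> hs (fun x => q x * mono z x) Q ->
  rlim (fun N => \sum_(x <- box N) nr (p x)) sp ->
  rlim (fun N => \sum_(x <- box N) nr (q x)) sq ->
  hs (fun y => conv p q y * mono z y) (P * Q).
Proof.
move=> z1 [_ HP] [_ HQ] Hp Hq.
have p0 x : 0 <= nr (p x) by apply: nr_ge0.
have q0 x : 0 <= nr (q x) by apply: nr_ge0.
have Ap N := rlim_box_le p0 Hp N.
have Aq N := rlim_box_le q0 Hq N.
have A0 N : 0 <= \sum_(x <- box N) nr (p x) by apply: sumr_ge0.
have B0 N : 0 <= \sum_(x <- box N) nr (q x) by apply: sumr_ge0.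
split.
  exists (sp * sq) => N; apply: le_trans (_ : \sum_(y <- box N) nr (conv p q y) <= _).
    apply: ler_sum => y _; rewrite nrM; have := mono_le1 y z1.
    have := nr_ge0 (conv p q y); have := nr_ge0 (mono z y); nra.
  apply: le_trans (conv_bound p q N) _; apply: le_trans (double_le N p0 q0) _.
  apply: ler_pM => //.
pose h x w := (p x * mono z x) * (q w * mono z w).
have E N : \sum_(y <- box N) conv p q y * mono z y =
    \sum_(x <- box N) \sum_(w <- box N | x + w \in box N) h x w.
  rewrite -conv_reindex; apply: eq_bigr => y _; rewrite /conv mulr_suml.
  apply: eq_bigr => x hx; have hm := mono_add z x (sub_mi y x).
  rewrite (add_subK hx) in hm; rewrite hm /h; ring.
pose M N := (N %/ 2)%N.
have MN N : (M N <= N)%N by apply: leq_div.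
have E2 N : (\sum_(x <- box (M N)) p x * mono z x) * (\sum_(w <- box (M N)) q w * mono z w) =
    \sum_(x <- box N) \sum_(w <- box N) (if (x \in box (M N)) && (w \in box (M N)) then h x w else 0).
  by rewrite (prod_ind _ _ (MN N)).
pose wN N := (\sum_(x <- box N) nr (p x)) * (\sum_(w <- box N) nr (q w)) -
  (\sum_(x <- box (M N)) nr (p x)) * (\sum_(w <- box (M N)) nr (q w)).
have Hw : rlim wN 0.
  apply/rlim_clim; rewrite /wN.
  have -> : (0 : R)%:C = sp%:C * sq%:C - sp%:C * sq%:C by rewrite subrr.
  have Hp' := iffLR (rlim_clim _ _) Hp; have Hq' := iffLR (rlim_clim _ _) Hq.
  apply: (clim_ev (clim_sub (clim_mul Hp' Hq') (clim_half (clim_mul Hp' Hq')))).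
  by exists 0%N => N _; rewrite rmorphB rmorphM /= rmorphM.
apply: (clim_squeeze (clim_mul (clim_half HP) (clim_half HQ)) Hw) => N.
rewrite E E2 /=.
apply: le_trans (nr_sumB _ _ _) _.
have -> : wN N = \sum_(x <- box N) \sum_(w <- box N)
    (if (x \in box (M N)) && (w \in box (M N)) then 0 else nr (p x) * nr (q w)).
  rewrite /wN (prod_ind _ _ (MN N)) (prod_ind _ _ (leqnn N)) -sumrB.
  apply: eq_big_seq => x xN; rewrite -sumrB; apply: eq_big_seq => w wN'.
  by rewrite xN wN' /=; case: ifP; rewrite ?subrr ?subr0.
apply: ler_sum => x xN.
rewrite big_mkcond /=.
apply: le_trans (nr_sumB _ _ _) _.
apply: ler_sum => w wN'.
have hb : nr (h x w) <= nr (p x) * nr (q w).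
  rewrite /h !nrM mulrACA; apply: ler_piMr; first by apply: mulr_ge0.
  by apply: mulr_ile1; rewrite ?nr_ge0 ?mono_le1.
case hx: (x \in box (M N)); case hw: (w \in box (M N)) => /=.
- have -> : x + w \in box N.
    apply/mem_boxP => j; rewrite ffunE; move/mem_boxP: hx => /(_ j); move/mem_boxP: hw => /(_ j).
    rewrite /M => a b; have := leq_trunc_div N 2.
    suff hh : (x j + w j < N)%N by move=> _; exact: hh.
    lia.
  by rewrite subrr nr0.
all: case: (x + w \in box N); rewrite ?subr0 ?subrr ?nr0 ?subr0 //; apply: mulr_ge0 => //.
Qed.


Lemma nocancel (p q : mi -> C) s t :
  rlim (fun N => \sum_(x <- box N) nr (p x)) 1 ->
  rlim (fun N => \sum_(x <- box N) nr (q x)) 1 ->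
  rlim (fun N => \sum_(y <- box N) nr (conv p q y)) 1 ->
  p s != 0 -> q t != 0 -> conv p q (s + t) != 0.
Proof.
move=> Hp Hq Hc ps qt; apply/negP => /eqP c0.
have p0 x : 0 <= nr (p x) by apply: nr_ge0.
have q0 x : 0 <= nr (q x) by apply: nr_ge0.
have [N0 HN0] := box_seq [:: s + t].
have Hpos : 0 < nr (p s) * nr (q t).
  by apply: mulr_gt0; rewrite lt_def nr_eq0 ?ps ?qt nr_ge0.
have key : forall N, (N0 <= N)%N -> \sum_(y <- box N) nr (conv p q y) <= 1 - nr (p s) * nr (q t).
  move=> N hN.
  have stN : s + t \in box N by apply: (box_mono hN); apply: HN0; rewrite inE eqxx.
  have h0 : \sum_(y <- box N) nr (conv p q y) <=
      \sum_(y <- box N) \sum_(x <- dom y | le_mi x y) nr (p x) * nr (q (sub_mi y x))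
      - nr (p s) * nr (q t).
    rewrite (bigD1_seq (s + t)) ?box_uniq //= [X in _ <= X - _](bigD1_seq (s + t)) ?box_uniq //=.
    rewrite c0 nr0 add0r.
    have h1 : \sum_(y <- box N | y != s + t) nr (conv p q y) <=
        \sum_(y <- box N | y != s + t) \sum_(x <- dom y | le_mi x y) nr (p x) * nr (q (sub_mi y x)).
      apply: ler_sum => y _; apply: le_trans (nr_sum _ _ _) _.
      by apply: ler_sum => x _; rewrite nrM.
    have h2 : nr (p s) * nr (q t) <=
        \sum_(x <- dom (s + t) | le_mi x (s + t)) nr (p x) * nr (q (sub_mi (s + t) x)).
      rewrite -big_filter (bigD1_seq s) /=; first last.
      - by apply: filter_uniq; apply: box_uniq.
      - by rewrite mem_filter le_mi_add le_mi_dom // le_mi_add.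
      rewrite addK_mi lerDl; apply: sumr_ge0 => x _; exact: mulr_ge0.
    lra.
  apply: le_trans h0 _; rewrite lerD2r.
  rewrite (conv_reindex (fun x w => nr (p x) * nr (q w))).
  apply: le_trans (double_le N p0 q0) _.
  rewrite -[1]mulr1; apply: ler_pM; rewrite ?sumr_ge0 //; exact: rlim_box_le.
have := rlim_le Hc (rlim_const (1 - nr (p s) * nr (q t))) (ex_intro _ N0 key).
lra.
Qed.

End Conv.


Section Disj.
Variable R : realType.
Local Notation C := R[i].
Variable k : nat.
Local Notation mi := {ffun 'I_k -> nat}.
Local Notation box := (@box k).
Local Notation hs := (@hs R k).
Local Notation bnd := (@bnd R k).

Lemma nrV (x : C) : x != 0 -> nr (x^-1) = (nr x)^-1.
Proof.
move=> x0; have n0 : nr x != 0 by rewrite nr_eq0.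
have : nr x * nr (x^-1) = 1 by rewrite -nrM mulfV // nr1.
by move=> h; rewrite -[LHS]mul1r -(mulVf n0) -mulrA h mulr1.
Qed.

Lemma disj (p q : mi -> C) x :
  rlim (fun N => \sum_(y <- box N) nr (p y)) 1 ->
  rlim (fun N => \sum_(y <- box N) nr (q y)) 1 ->
  (forall l : C, nr l = 1 -> rlim (fun N => \sum_(y <- box N) nr (p y + l * q y)) 2) ->
  p x = 0 \/ q x = 0.
Proof.
move=> Hp Hq Hl.
case: (eqVneq (p x) 0) => [->|px]; first by left.
case: (eqVneq (q x) 0) => [->|qx]; first by right.
exfalso.
pose a := nr (p x); pose b := nr (q x).
have a0 : 0 < a by rewrite lt_def nr_eq0 px nr_ge0.
have b0 : 0 < b by rewrite lt_def nr_eq0 qx nr_ge0.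
pose l := - (p x / q x) * (b / a)%:C.
have hl : nr l = 1.
  rewrite /l nrM nrN nrM nrV // nr_real ger0_norm; last by apply: divr_ge0; apply: ltW.
  rewrite -/a -/b; field; lra.
have hpl : nr (p x + l * q x) = `|a - b|.
  have -> : p x + l * q x = p x * (1 - b / a)%:C.
    have ha : a%:C != 0 by rewrite (inj_eq (@complexI R)); apply: lt0r_neq0.
    rewrite /l rmorphB rmorph1 /=; field; rewrite qx andbT; exact: ha.
  rewrite nrM nr_real -/a.
  have -> : a * `|1 - b / a| = `|a * (1 - b / a)| by rewrite normrM (ger0_norm (ltW a0)).
  by rewrite mulrBr mulr1 [a * _]mulrC divfK // lt0r_neq0.
have p0 y : 0 <= nr (p y) by apply: nr_ge0.
have q0 y : 0 <= nr (q y) by apply: nr_ge0.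
have key : forall N, ((\sum_j x j).+1 <= N)%N ->
    \sum_(y <- box N) nr (p y + l * q y) <= 2 - (a + b - `|a - b|).
  move=> N hN; have xN : x \in box N by apply: (box_mono hN); apply: box_self.
  rewrite (bigD1_seq x) ?box_uniq //= hpl.
  have h1 := rlim_box_le p0 Hp N; have h2 := rlim_box_le q0 Hq N.
  rewrite (bigD1_seq x) ?box_uniq //= -/a in h1.
  rewrite (bigD1_seq x) ?box_uniq //= -/b in h2.
  have h3 : \sum_(y <- box N | y != x) nr (p y + l * q y) <=
      \sum_(y <- box N | y != x) nr (p y) + \sum_(y <- box N | y != x) nr (q y).
    rewrite -big_split /=; apply: ler_sum => y _; apply: le_trans (nrD _ _) _.
    by rewrite nrM hl mul1r.
  lra.
have := rlim_le (Hl l hl) (rlim_const _) (ex_intro _ _ key).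
have : `|a - b| < a + b by rewrite ltr_norml; lra.
lra.
Qed.

End Disj.


Section Reidx.
Variable R : realType.
Local Notation C := R[i].
Variable k : nat.
Local Notation mi := {ffun 'I_k -> nat}.
Local Notation box := (@box k).
Local Notation hs := (@hs R k).
Local Notation bnd := (@bnd R k).

Variable iota : mi -> mi.
Variable Bd : mi -> nat.
Hypothesis hB : forall x, x \in box (Bd (iota x)).
Hypothesis hinj : injective iota.
Hypothesis hpre : forall N, exists L, forall x, iota x \in box N -> x \in box L.
Hypothesis himg : forall L, exists N, forall x, x \in box L -> iota x \in box N.

Definition G (V : nmodType) (F : mi -> V) (y : mi) : V :=
  \sum_(x <- box (Bd y) | iota x == y) F x.

Lemma reidx_sum (V : nmodType) (F : mi -> V) N L :
  (forall x, iota x \in box N -> x \in box L) ->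
  \sum_(y <- box N) G F y = \sum_(x <- box L | iota x \in box N) F x.
Proof.
move=> HL.
rewrite big_seq (eq_bigr (fun y => \sum_(x <- box L) (if iota x == y then F x else 0))); last first.
  move=> y yN; rewrite /G -big_mkcond /=; apply: sumeq; rewrite ?box_uniq // => x /eqP hx.
  by rewrite -hx hB HL // hx.
rewrite -big_seq exchange_big /= [RHS]big_mkcond /=; apply: eq_bigr => x _.
case: ifP => h.
  rewrite (eq_bigr (fun y => if y == iota x then F x else 0)) ?sum_pt // => y _.
  by rewrite eq_sym.
rewrite big1_seq // => y /andP[_ yN]; case: eqP => // hy.
by rewrite hy yN in h.
Qed.

Lemma reidx_hs (F : mi -> C) S : hs F S -> hs (G F) S.
Proof.
move=> Hs; have [[M HM] _] := Hs; split.
  exists M => N; have [L HL] := hpre N.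
  apply: le_trans (_ : \sum_(y <- box N) G (fun x => nr (F x)) y <= _).
    by apply: ler_sum => y _; apply: nr_sum.
  rewrite (reidx_sum _ HL); apply: le_trans (HM L).
  rewrite [X in _ <= X](bigID (fun x => iota x \in box N)) /= lerDl.
  by apply: sumr_ge0 => x _; apply: nr_ge0.
move=> e e0; have [N0 H0] := hs_super Hs e0; have [N1 H1] := himg N0.
exists N1 => N HN; have [L HL] := hpre N.
rewrite (reidx_sum _ HL) -big_filter; apply: H0.
  by apply: filter_uniq; apply: box_uniq.
move=> x xN0; rewrite mem_filter; have ix : iota x \in box N.
  by apply: (box_mono HN); apply: H1.
by rewrite ix HL.
Qed.

Lemma reidx_norm (F : mi -> C) y : `|G F y| = G (fun x => `|F x|) y.
Proof.
rewrite /G -big_filter -[RHS]big_filter.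
case E: [seq x <- box (Bd y) | iota x == y] => [|x0 s]; first by rewrite !big_nil normr0.
have u : uniq (x0 :: s) by rewrite -E; apply: filter_uniq; apply: box_uniq.
case: s E u => [|x1 s] E u; first by rewrite !big_seq1.
exfalso.
have h0 : x0 \in [seq x <- box (Bd y) | iota x == y] by rewrite E inE eqxx.
have h1 : x1 \in [seq x <- box (Bd y) | iota x == y] by rewrite E !inE eqxx orbT.
rewrite !mem_filter in h0 h1; case/andP: h0 => /eqP h0 _; case/andP: h1 => /eqP h1 _.
have e01 : x0 = x1 by apply: hinj; rewrite h0 h1.
by move: u; rewrite e01 /= inE eqxx.
Qed.

End Reidx.


Lemma Posz_sum (I : Type) (r : seq I) (F : I -> nat) :
  Posz (\sum_(i <- r) F i)%N = \sum_(i <- r) Posz (F i).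
Proof. by apply: (big_morph Posz PoszD). Qed.

Lemma nat_rel n (A : 'M[nat]_n) : \det (map_mx (fun m : nat => m%:Z) A) = 0 ->
  exists al be : 'I_n -> nat, (exists i, al i != be i) /\
    forall j, (\sum_i al i * A i j = \sum_i be i * A i j)%N.
Proof.
move/eqP/det0P => [v v0 vA].
pose al i := if (0 <= v 0 i) then absz (v 0 i) else 0%N.
pose be i := if (v 0 i < 0) then absz (v 0 i) else 0%N.
have hv i : v 0 i = (al i)%:Z - (be i)%:Z.
  rewrite /al /be; case: (lerP 0 (v 0 i)) => h.
    by rewrite gez0_abs // subr0.
  by rewrite ltz0_abs // sub0r opprK.
exists al, be; split.
  apply: NNPP => H; apply: (negP v0); apply/eqP/rowP => j.
  have : al j = be j by apply/eqP; apply: NNPP => h; apply: H; exists j; apply/negP.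
  by rewrite mxE hv => ->; rewrite subrr.
move=> j; apply/eqP; rewrite -(eqr_nat int) !natr_sum.
have := congr1 (fun M : 'M[int]_(1,n) => M 0 j) vA; rewrite !mxE => h.
rewrite -subr_eq0; apply/eqP; rewrite -sumrB; apply: etrans h.
apply: eq_bigr => i _; by rewrite !mxE hv mulrBl !natz !PoszM.
Qed.

Lemma insubd_ord k (j0 : 'I_k) (j : 'I_k) : insubd j0 (nat_of_ord j) = j.
Proof. by apply: val_inj; rewrite val_insubd ltn_ord. Qed.

Lemma dep_rel k (j0 : 'I_k) (V : 'I_k.+1 -> {ffun 'I_k -> nat}) :
  exists al be : 'I_k.+1 -> nat, (exists l, al l != be l) /\
    forall j : 'I_k, (\sum_l al l * V l j = \sum_l be l * V l j)%N.
Proof.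
pose A : 'M[nat]_k.+1 := \matrix_(l, j) V l (insubd j0 (nat_of_ord j)).
have hd : \det (map_mx (fun m : nat => m%:Z) A) = 0.
  rewrite -det_tr; apply: (@determinant_alternate _ _ _ (widen_ord (leqnSn k) j0) ord_max).
    by rewrite -(inj_eq val_inj) /= neq_ltn ltn_ord.
  move=> l; rewrite !mxE; congr (Posz (V l _)); apply: val_inj.
  by rewrite !val_insubd /= ltn_ord ltnn.
have [al [be [H1 H2]]] := nat_rel hd.
exists al, be; split => // j; have := H2 (widen_ord (leqnSn k) j).
by rewrite /A; under eq_bigr do rewrite mxE /= insubd_ord; under [X in _ = X -> _]eq_bigr do rewrite mxE /= insubd_ord.
Qed.


Section IfDir.
Variable R : realType.
Local Notation C := R[i].
Variable k : nat.
Local Notation mi := {ffun 'I_k -> nat}.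
Local Notation box := (@box k).
Local Notation hs := (@hs R k).
Local Notation bnd := (@bnd R k).

Variable A : 'M[nat]_k.
Hypothesis hdet : \det (map_mx (fun n : nat => n%:Z) A) != 0.

Definition iot (x : mi) : mi := [ffun j => \sum_i x i * A i j]%N.
Definition Bd (y : mi) := (\sum_j y j).+1.

Lemma ffun_id (x : mi) : [ffun j => x j] = x.
Proof. by apply/ffunP => j; rewrite ffunE. Qed.

Lemma hrow i : exists j, (0 < A i j)%N.
Proof.
apply: NNPP => H; move/negP: hdet; apply; apply/det0P.
exists (\row_l (l == i)%:R).
  apply/eqP => /rowP /(_ i); rewrite !mxE eqxx => /eqP; by rewrite oner_eq0.
apply/rowP => j; rewrite !mxE (bigD1 i) //= big1 ?addr0.
  rewrite !mxE eqxx mul1r; case: (posnP (A i j)) => [->|h] //.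
  by exfalso; apply: H; exists j.
by move=> l /negPf hl; rewrite !mxE hl mul0r.
Qed.

Lemma iot_ge (x : mi) i : exists j, (x i <= iot x j)%N.
Proof.
have [j hj] := hrow i; exists j; rewrite ffunE (bigD1 i) //=.
apply: leq_trans (leq_addr _ _); rewrite -{1}[x i]muln1; exact: leq_mul.
Qed.

Lemma hB (x : mi) : x \in box (Bd (iot x)).
Proof.
apply/mem_boxP => i; have [j hj] := iot_ge x i; rewrite /Bd ltnS.
apply: leq_trans hj _; rewrite (bigD1 j) //=; exact: leq_addr.
Qed.

Lemma hpre N : exists L, forall x : mi, iot x \in box N -> x \in box L.
Proof.
exists N => x /mem_boxP H; apply/mem_boxP => i; have [j hj] := iot_ge x i.
exact: leq_ltn_trans hj (H j).
Qed.

Lemma himg L : exists N, forall x : mi, x \in box L -> iot x \in box N.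
Proof.
exists (L * \sum_i \sum_j A i j).+1 => x /mem_boxP H; apply/mem_boxP => j.
rewrite ffunE ltnS.
apply: leq_trans (_ : (\sum_i L * A i j <= _)%N).
  by apply: leq_sum => i _; apply: leq_mul => //; apply: ltnW.
rewrite -big_distrr /=; apply: leq_mul => //.
by apply: leq_sum => i _; rewrite (bigD1 j) //= leq_addr.
Qed.

Lemma hinj : injective iot.
Proof.
move=> x y hxy; apply: NNPP => hne; move/negP: hdet; apply; apply/det0P.
exists (\row_l ((x l)%:Z - (y l)%:Z)).
  apply/eqP => /rowP H; apply: hne; apply/ffunP => l.
  by have := H l; rewrite !mxE => /eqP; rewrite subr_eq0 => /eqP [].
apply/rowP => j; rewrite !mxE.
have := congr1 (fun f : mi => f j) hxy; rewrite !ffunE => h.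
under eq_bigr do rewrite !mxE mulrBl.
rewrite sumrB -!Posz_sum.
have -> : (\sum_i x i * A i j)%N = (\sum_i y i * A i j)%N by [].
by rewrite subrr.
Qed.


Variable eps : 'I_k -> C.
Hypothesis heps : forall i, `|eps i| = 1.

Definition Phi (z : 'I_k -> C) : 'I_k -> C := fun i => eps i * \prod_j z j ^+ A i j.

Lemma mono_Phi z (x : mi) : mono (Phi z) x = mono eps x * mono z (iot x).
Proof.
rewrite /mono /Phi.
under eq_bigr do rewrite exprMn.
rewrite big_split /=; congr (_ * _).
rewrite (eq_bigr (fun i => \prod_j z j ^+ (A i j * x i)%N)); last first.
  by move=> i _; rewrite -prodrXl; apply: eq_bigr => j _; rewrite exprM.
rewrite exchange_big /=; apply: eq_bigr => j _; rewrite prodrXr ffunE.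
by congr (_ ^+ _); apply: eq_bigr => i _; rewrite mulnC.
Qed.

Lemma nr_eps i : nr (eps i) = 1.
Proof. by apply: (@complexI R); rewrite -normE heps. Qed.

Lemma nr_mono_eps x : nr (mono eps x) = 1.
Proof.
rewrite /mono nr_prod big1 // => i _; by rewrite nrX nr_eps expr1n.
Qed.

Lemma Phi_closed z : (forall j, nr (z j) <= 1) -> forall i, nr (Phi z i) <= 1.
Proof.
move=> hz i; rewrite /Phi nrM nr_eps mul1r nr_prod; apply: prodr_ile1 => j _.
rewrite nrX exprn_ge0 ?nr_ge0 //=; apply: exprn_ile1; [exact: nr_ge0 | exact: hz].
Qed.

Lemma if_dir (phi : ('I_k -> C) -> 'I_k -> C) :
  (forall z, open_polydisc z -> forall i, phi z i = eps i * \prod_(j < k) z j ^+ A i j) ->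
  Cphi_isometry phi.
Proof.
move=> Hphi f g S _ [c [Hcs Hcr]] Hfg [a [[Has Har] Han]].
pose a' (x : mi) := a x * mono eps x.
pose b := G iot Bd a'.
have HPhi : forall z, (forall j, nr (z j) <= 1) -> hs (fun y => b y * mono z y) (f (Phi z)).
  move=> z hz.
  have h1 : hs (fun x : mi => a x * mono (Phi z) x) (f (Phi z)).
    apply: (iffLR (has_sumP (fun al => a al * mono (Phi z) al) _)).
    apply: Har => i; rewrite nr_le1; exact: Phi_closed.
  have e1 : (fun x : mi => a x * mono (Phi z) x) = (fun x => a' x * mono z (iot x)).
    by apply: functional_extensionality => x; rewrite mono_Phi /a' mulrA.
  rewrite e1 in h1; have h2 := reidx_hs hB hpre himg h1.
  have e2 : G iot Bd (fun x => a' x * mono z (iot x)) = (fun y => b y * mono z y).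
    apply: functional_extensionality => y; rewrite /G /b /G mulr_suml.
    by apply: eq_bigr => x /eqP ->.
  by rewrite e2 in h2.
have Hopen : forall z, (forall j, nr (z j) < 1) -> f (Phi z) = g z.
  move=> z hz; have oz : open_polydisc z by move=> j; rewrite nr_lt1.
  rewrite Hfg //; congr f; apply: functional_extensionality => i; by rewrite Hphi.
have Hbn : hs (fun y => `|b y|) S.
  have h := iffLR (has_sumP _ _) Han.
  have e : (fun x : mi => `|a x|) = (fun x => `|a' x|).
    apply: functional_extensionality => x; rewrite /a' normrM [X in _ = _ * X]normE nr_mono_eps.
    by rewrite rmorph1 mulr1.
  rewrite /= e in h; have h2 := reidx_hs hB hpre himg h.
  have e2 : G iot Bd (fun x => `|a' x|) = (fun y => `|b y|).
    by apply: functional_extensionality => y; rewrite /b reidx_norm //; apply: hinj.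
  by rewrite e2 in h2.
have Hbb : bnd b.
  have [[M HM] _] := Hbn; exists M => N; have := HM N.
  by under eq_bigr do rewrite nr_norm.
have Hcb : forall x : mi, c x = b x.
  apply: (coef_unique (a := fun x : mi => c x) (b := b) (f := g)).
  - by apply/abs_summableP.
  - exact: Hbb.
  - move=> z hz; apply: (iffLR (has_sumP (fun al => c al * mono z al) _)).
    apply: Hcr => j; rewrite nr_le1; apply: ltW; exact: hz.
  - move=> z hz; rewrite -Hopen //; apply: HPhi => j; exact: ltW (hz j).
have eb : (fun x : mi => b [ffun j => x j]) = b.
  by apply: functional_extensionality => x; rewrite ffun_id.
exists (fun al => b [ffun j => al j]); split; [split|].
- by apply/abs_summableP; rewrite eb.
- move=> z hz; apply: (iffRL (has_sumP (fun al => b [ffun j => al j] * mono z al) _)).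
  have e : (fun x : mi => b [ffun j => x j] * mono z x) = (fun x : mi => c x * mono z x).
    by apply: functional_extensionality => x; rewrite ffun_id Hcb.
  by rewrite e; apply: (iffLR (has_sumP (fun al => c al * mono z al) _)); apply: Hcr.
- apply: (iffRL (has_sumP (fun al => `|b [ffun j => al j]|) _)).
  have e : (fun x : mi => `|b [ffun j => x j]|) = (fun y => `|b y|).
    by apply: functional_extensionality => x; rewrite ffun_id.
  by rewrite e.
Qed.

End IfDir.


Section OnlyIf.
Variable R : realType.
Local Notation C := R[i].
Variable k : nat.
Local Notation mi := {ffun 'I_k -> nat}.
Local Notation box := (@box k).
Local Notation hs := (@hs R k).
Local Notation bnd := (@bnd R k).

Definition lift (F : mi -> C) := fun al : 'I_k -> nat => F [ffun j => al j].

Lemma lift_id (F : mi -> C) : (fun x : mi => lift F x) = F.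
Proof. by apply: functional_extensionality => x; rewrite /lift ffun_id. Qed.

Lemma rep_lift (F : mi -> C) (f : ('I_k -> C) -> C) : bnd F ->
  (forall z, (forall j, nr (z j) <= 1) -> hs (fun x => F x * mono z x) (f z)) ->
  Aplus_rep (lift F) f.
Proof.
move=> HF Hr; split; first by apply/abs_summableP; rewrite lift_id.
move=> z hz; apply: (iffRL (has_sumP (fun al => lift F al * mono z al) _)).
have -> : (fun x : mi => lift F x * mono z x) = (fun x => F x * mono z x).
  by apply: functional_extensionality => x; rewrite /lift ffun_id.
by apply: Hr => j; rewrite -nr_le1.
Qed.

Lemma norm_lift (F : mi -> C) S : hs (fun x => `|F x|) S ->
  has_sum (fun al => `|lift F al|) S.
Proof.
move=> H; apply: (iffRL (has_sumP (fun al => `|lift F al|) _)).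
have -> : (fun x : mi => `|lift F x|) = (fun x => `|F x|).
  by apply: functional_extensionality => x; rewrite /lift ffun_id.
done.
Qed.

Lemma rep_unlift (a : ('I_k -> nat) -> C) f : Aplus_rep a f ->
  bnd (fun x : mi => a x) /\
  forall z, (forall j, nr (z j) <= 1) -> hs (fun x : mi => a x * mono z x) (f z).
Proof.
move=> [Ha Hr]; split; first by apply/abs_summableP.
move=> z hz; apply: (iffLR (has_sumP (fun al => a al * mono z al) _)).
by apply: Hr => j; rewrite nr_le1.
Qed.

Variable phi : ('I_k -> C) -> ('I_k -> C).
Hypothesis Hmap : Cphi_maps_Aplus phi.
Hypothesis Hiso : Cphi_isometry phi.

Lemma iso_cons (F : mi -> C) (f : ('I_k -> C) -> C) (S : C) : bnd F ->
  (forall z, (forall j, nr (z j) <= 1) -> hs (fun x => F x * mono z x) (f z)) ->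
  hs (fun x => `|F x|) S ->
  exists b : mi -> C, bnd b /\
    (forall z, (forall j, nr (z j) < 1) -> hs (fun x => b x * mono z x) (f (phi z))) /\
    hs (fun x => `|b x|) S.
Proof.
move=> HF Hr Hn.
have rf := rep_lift HF Hr.
have inf : in_Aplus f by exists (lift F).
have [g [ing Hg]] := Hmap inf.
have Hnf : Aplus_norm_is f S by exists (lift F); split => //; apply: norm_lift.
have [b0 [Hb0 Hb0n]] := Hiso inf ing Hg Hnf.
exists (fun x : mi => b0 x); have [h1 h2] := rep_unlift Hb0; split => //; split.
  move=> z hz; rewrite -Hg; last by move=> j; rewrite nr_lt1.
  by apply: h2 => j; apply: ltW.
exact: (iffLR (has_sumP (fun al => `|b0 al|) _)).
Qed.

Definition delta (a : mi) (x : mi) : C := if x == a then 1 else 0.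

Lemma hs_delta (a : mi) (z : 'I_k -> C) : hs (fun x => delta a x * mono z x) (mono z a).
Proof.
have -> : (fun x => delta a x * mono z x) = (fun x => if x == a then mono z a else 0).
  by apply: functional_extensionality => x; rewrite /delta; case: eqP => [->|_]; rewrite ?mul1r ?mul0r.
exact: hs_pt.
Qed.

Lemma bnd_delta a : bnd (delta a).
Proof. by have [h _] := hs_pt a (1 : C); rewrite /delta. Qed.

Lemma hs_delta_norm (a : mi) : hs (fun x => `|delta a x|) 1.
Proof.
have -> : (fun x => `|delta a x|) = (fun x => if x == a then (1 : C) else 0).
  by apply: functional_extensionality => x; rewrite /delta; case: eqP; rewrite ?normr1 ?normr0.
exact: hs_pt.
Qed.

Definition Rep (a : mi) (r : mi -> C) :=
  bnd r /\ forall z, (forall j, nr (z j) < 1) -> hs (fun x => r x * mono z x) (mono (phi z) a).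
Definition Nrm1 (r : mi -> C) := rlim (fun N => \sum_(x <- box N) nr (r x)) 1.

Lemma rep_unique a r1 r2 : Rep a r1 -> Rep a r2 -> forall x, r1 x = r2 x.
Proof. move=> [h1 H1] [h2 H2]; exact: coef_unique h1 h2 H1 H2. Qed.

Lemma exists_rep a : exists r, Rep a r /\ Nrm1 r.
Proof.
have [b [hb [Hb Hbn]]] := iso_cons (f := fun z => mono z a) (bnd_delta a) (fun z _ => hs_delta a z) (hs_delta_norm a).
exists b; split; first by split.
have : hs (fun x => `|b x|) (1 : R)%:C by [].
by case/hs_norm.
Qed.


Lemma rep_choice : exists r : mi -> mi -> C, forall a, Rep a (r a) /\ Nrm1 (r a).
Proof.
exists (fun a => proj1_sig (constructive_indefinite_description _ (exists_rep a))).
move=> a; exact: (proj2_sig (constructive_indefinite_description _ (exists_rep a))).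
Qed.

Lemma mono0 (w : 'I_k -> C) : mono w (0 : mi) = 1.
Proof. by rewrite /mono big1 // => j _; rewrite ffunE expr0. Qed.

Lemma conv_bnd (p q : mi -> C) : Nrm1 p -> Nrm1 q -> bnd (conv p q).
Proof.
move=> Hp Hq; exists 1 => N.
have p0 x : 0 <= nr (p x) by apply: nr_ge0.
have q0 x : 0 <= nr (q x) by apply: nr_ge0.
apply: le_trans (conv_bound p q N) _; apply: le_trans (double_le N p0 q0) _.
rewrite -[1]mulr1; apply: ler_pM; rewrite ?sumr_ge0 //; exact: rlim_box_le.
Qed.

Variable r : mi -> mi -> C.
Hypothesis Hr : forall a, Rep a (r a) /\ Nrm1 (r a).

Lemma r0 x : r 0 x = delta 0 x.
Proof.
apply: (rep_unique (Hr 0).1); split; first exact: bnd_delta.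
move=> z hz; rewrite mono0; have := hs_delta 0 z; by rewrite mono0.
Qed.

Lemma rep_add a b x : r (a + b) x = conv (r a) (r b) x.
Proof.
apply: (rep_unique (Hr (a + b)).1); split; first by apply: conv_bnd; [exact: (Hr a).2 | exact: (Hr b).2].
move=> z hz; rewrite mono_add; apply: cauchy_prod.
- by move=> j; apply: ltW.
- exact: ((Hr a).1.2 z hz).
- exact: ((Hr b).1.2 z hz).
- exact: (Hr a).2.
- exact: (Hr b).2.
Qed.

Lemma step a b s t : r a s != 0 -> r b t != 0 -> r (a + b) (s + t) != 0.
Proof.
move=> hs ht; rewrite rep_add; apply: nocancel => //; try exact: (Hr _).2.
have -> : (fun N => \sum_(y <- box N) nr (conv (r a) (r b) y)) =
          (fun N => \sum_(y <- box N) nr (r (a + b) y)).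
  by apply: functional_extensionality => N; apply: eq_bigr => y _; rewrite rep_add.
exact: (Hr _).2.
Qed.

Lemma disjoint a b : a != b -> forall x, r a x = 0 \/ r b x = 0.
Proof.
move=> hab x; apply: (disj _ (Hr a).2 (Hr b).2) => l hl.
pose F x := delta a x + l * delta b x.
have HF : bnd F by apply: bnd_add; [exact: bnd_delta | apply: bnd_scale; exact: bnd_delta].
have HFr : forall z, (forall j, nr (z j) <= 1) ->
    hs (fun x => F x * mono z x) (mono z a + l * mono z b).
  move=> z _; have := hs_add (hs_delta a z) (hs_scale l (hs_delta b z)).
  have -> : (fun x => delta a x * mono z x + l * (delta b x * mono z x)) = (fun x => F x * mono z x).
    by apply: functional_extensionality => y; rewrite /F; ring.
  done.
have HFn : hs (fun x => `|F x|) (1 + 1).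
  have := hs_add (hs_pt a (1 : C)) (hs_pt b (1 : C)).
  have -> : (fun x => (if x == a then (1 : C) else 0) + (if x == b then 1 else 0)) = (fun x => `|F x|).
    apply: functional_extensionality => y; rewrite /F /delta.
    have ba : (b == a) = false by rewrite eq_sym (negPf hab).
    case: (eqVneq y a) => [ya|ya]; case: (eqVneq y b) => [yb|yb].
    + by move: hab; rewrite -ya yb eqxx.
    + by rewrite ?mulr0 ?addr0 ?normr1.
    + by rewrite ?mulr1 ?add0r normE hl.
    + by rewrite ?mulr0 ?addr0 ?normr0.
  done.
have [c [Hc [Hcr Hcn]]] := iso_cons HF HFr HFn.
have E : forall y, c y = r a y + l * r b y.
  apply: (coef_unique Hc _ Hcr).
    by apply: bnd_add; [exact: (Hr a).1.1 | apply: bnd_scale; exact: (Hr b).1.1].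
  move=> z hz; have := hs_add ((Hr a).1.2 z hz) (hs_scale l ((Hr b).1.2 z hz)).
  have -> : (fun x => r a x * mono z x + l * (r b x * mono z x)) = (fun x => (r a x + l * r b x) * mono z x).
    by apply: functional_extensionality => y; ring.
  done.
have : hs (fun x => `|r a x + l * r b x|) (2 : R)%:C.
  have -> : (fun x => `|r a x + l * r b x|) = (fun x => `|c x|).
    by apply: functional_extensionality => y; rewrite E.
  by rewrite rmorphMn /= rmorph1.
by case/hs_norm.
Qed.

Lemma nonempty a : exists s, r a s != 0.
Proof.
apply: NNPP => H.
have z0 : forall s, r a s = 0 by move=> s; apply/eqP; apply: NNPP => h; apply: H; exists s; apply/negP.
have e : (fun N => \sum_(x <- box N) nr (r a x)) = (fun _ => 0).
  by apply: functional_extensionality => N; rewrite big1 // => x _; rewrite z0 nr0.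
have := (Hr a).2; rewrite /Nrm1 e => h.
by have /eqP := rlim_unique h (rlim_const 0); rewrite oner_eq0.
Qed.


Definition ev (i : 'I_k) : mi := [ffun j => (j == i : nat)].

Lemma step_mul e v y1 y2 : r e v != 0 -> r y1 y2 != 0 ->
  forall m, r (e *+ m + y1) (v *+ m + y2) != 0.
Proof.
move=> he hy; elim=> [|m IH]; first by rewrite !mulr0n !add0r.
rewrite !mulrS -!addrA; exact: step.
Qed.

Lemma MK n (w : 'I_n -> nat) (ci : 'I_n -> 'I_k) (V : 'I_n -> mi) :
  (forall l, r (ev (ci l)) (V l) != 0) ->
  r (\sum_l ev (ci l) *+ w l) (\sum_l V l *+ w l) != 0.
Proof.
move=> H; apply: (big_rec2 (fun y1 y2 => r y1 y2 != 0)).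
  by rewrite r0 /delta eqxx oner_eq0.
move=> l y1 y2 _ hy; exact: step_mul.
Qed.

Lemma rel_contra n (w1 w2 : 'I_n -> nat) (ci : 'I_n -> 'I_k) (V : 'I_n -> mi) :
  (forall l, r (ev (ci l)) (V l) != 0) ->
  \sum_l V l *+ w1 l = \sum_l V l *+ w2 l ->
  \sum_l ev (ci l) *+ w1 l = \sum_l ev (ci l) *+ w2 l.
Proof.
move=> H E; apply: NNPP => hne.
have hne' : \sum_l ev (ci l) *+ w1 l != \sum_l ev (ci l) *+ w2 l by apply/eqP.
have h1 := MK w1 H; have h2 := MK w2 H.
case: (disjoint hne' (\sum_l V l *+ w1 l)) => /eqP; first by apply/negP.
by rewrite E; apply/negP.
Qed.


Lemma natmul (x m : nat) : (x *+ m)%R = (x * m)%N.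
Proof. by elim: m => [|m IH]; rewrite ?mulr0n ?muln0 // mulrS IH mulnS. Qed.

Lemma coord_sum n (F : 'I_n -> mi) (w : 'I_n -> nat) j :
  (\sum_l F l *+ w l) j = (\sum_l F l j * w l)%N.
Proof. by rewrite sum_ffunE; apply: eq_bigr => l _; rewrite ffunMnE natmul. Qed.

Variable sel : 'I_k -> mi.
Hypothesis Hsel : forall i, r (ev i) (sel i) != 0.

Lemma single i t : r (ev i) t != 0 -> t = sel i.
Proof.
move=> ht; apply: NNPP => hne.
pose ci (l : 'I_k.+1) : 'I_k := insubd i (val l).
pose V (l : 'I_k.+1) : mi := if (val l < k)%N then sel (ci l) else t.
have ciE (l : 'I_k.+1) : val (ci l) = if (val l < k)%N then val l else val i by rewrite /ci val_insubd.
have HV : forall l, r (ev (ci l)) (V l) != 0.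
  move=> l; rewrite /V; case: ifP => hl; first exact: Hsel.
  have -> : ci l = i by apply: val_inj; rewrite ciE hl.
  exact: ht.
have [al [be [[l0 hl0] Hrel]]] := dep_rel i V.
have E1 : \sum_l V l *+ al l = \sum_l V l *+ be l.
  apply/ffunP => j; rewrite !coord_sum.
  have := Hrel j; rewrite (eq_bigr (fun l => V l j * al l)%N) => [->|l _]; last by rewrite mulnC.
  by apply: eq_bigr => l _; rewrite mulnC.
have E2 := rel_contra HV E1.
pose wi := widen_ord (leqnSn k) i; pose mx : 'I_k.+1 := ord_max.
have hmw : mx != wi by rewrite -(inj_eq val_inj) /= neq_ltn ltn_ord orbT.
have ciwi : ci wi = i by apply: val_inj; rewrite ciE /= ltn_ord.
have cimx : ci mx = i by apply: val_inj; rewrite ciE /= ltnn.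
have Ecoord j : (\sum_l (ev (ci l) j) * al l = \sum_l (ev (ci l) j) * be l)%N.
  by have := congr1 (fun f : mi => f j) E2; rewrite !coord_sum.
have hA : forall l, l != wi -> l != mx -> al l = be l.
  move=> l lw lm.
  have lk : (val l < k)%N by rewrite -ltnS ltn_neqAle ltn_ord andbT; move: lm; rewrite -(inj_eq val_inj).
  have cil : val (ci l) = val l by rewrite ciE lk.
  have S1 (w : 'I_k.+1 -> nat) : (\sum_l' (ev (ci l') (ci l)) * w l' = w l)%N.
    rewrite (bigD1 l) //= big1 ?addn0; first by rewrite ffunE eqxx mul1n.
    move=> l' hl'; rewrite ffunE; case: eqP => // h; exfalso.
    have : val (ci l) = val (ci l') by rewrite h.
    rewrite cil ciE; case: ifP => h2.
      by move=> h3; move: hl'; rewrite -(inj_eq val_inj) -h3 eqxx.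
    by move=> h3; move: lw; rewrite -(inj_eq val_inj) /= h3 eqxx.
  by have := Ecoord (ci l); rewrite !S1.
have hB : (al wi + al mx = be wi + be mx)%N.
  have S2 (w : 'I_k.+1 -> nat) : (\sum_l (ev (ci l) i) * w l = w wi + w mx)%N.
    rewrite (bigD1 wi) //= (bigD1 mx) //= big1 ?addn0.
      by rewrite !ffunE ciwi cimx eqxx !mul1n.
    move=> l /andP[lw lm]; rewrite ffunE; case: eqP => // h; exfalso.
    have lk : (val l < k)%N by rewrite -ltnS ltn_neqAle ltn_ord andbT; move: lm; rewrite -(inj_eq val_inj).
    have : val (ci l) = val i by rewrite -h.
    rewrite ciE lk => h3; move: lw; rewrite -(inj_eq val_inj) /= h3 eqxx //.
  by have := Ecoord i; rewrite !S2.
have hC : al wi <> be wi \/ al mx <> be mx.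
  case: (eqVneq l0 wi) => [e|l0w]; first by left; rewrite -e; apply/eqP.
  case: (eqVneq l0 mx) => [e|l0m]; first by right; rewrite -e; apply/eqP.
  by move: hl0; rewrite hA // eqxx.
have split2 (F : 'I_k.+1 -> nat) :
    (\sum_l F l = F wi + F mx + \sum_(l | (l != wi) && (l != mx)) F l)%N.
  by rewrite (bigD1 wi) //= (bigD1 mx) //= addnA.
have Vwi : V wi = sel i by rewrite /V /= ltn_ord ciwi.
have Vmx : V mx = t by rewrite /V /= ltnn.
apply: hne; apply/ffunP => c.
have := Hrel c.
rewrite !split2.
rewrite (eq_bigr (fun l => be l * V l c)%N); last by move=> l /andP[lw lm]; rewrite hA.
rewrite Vwi Vmx => h.
move/eqP: h; rewrite eqn_add2r => /eqP h'.
have key : forall a1 a2 b1 b2 x y : nat, (a1*x + a2*y = b1*x + b2*y)%N ->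
    (a1 + a2 = b1 + b2)%N -> (a1 <> b1 \/ a2 <> b2) -> y = x.
  by move=> a1 a2 b1 b2 x y h1 h2 [] h3; nia.
exact: key h' hB hC.
Qed.


Lemma det_nz : \det (map_mx (fun n : nat => n%:Z) (\matrix_(i, j) sel i j)) != 0.
Proof.
apply/negP => /eqP h; have [al [be [[l0 hl0] Hrel]]] := nat_rel h.
have E1 : \sum_l sel l *+ al l = \sum_l sel l *+ be l.
  apply/ffunP => j; rewrite !coord_sum.
  have := Hrel j; rewrite (eq_bigr (fun l => sel l j * al l)%N) => [->|l _]; last by rewrite mxE mulnC.
  by apply: eq_bigr => l _; rewrite mxE mulnC.
have E2 := @rel_contra _ al be (fun l => l) _ (fun l => Hsel l) E1.
have S (w : 'I_k -> nat) : (\sum_l ev l l0 * w l = w l0)%N.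
  rewrite (bigD1 l0) //= big1 ?addn0; first by rewrite ffunE eqxx mul1n.
  by move=> l hl; rewrite ffunE eq_sym (negPf hl).
have := congr1 (fun f : mi => f l0) E2; rewrite !coord_sum !S => e.
by rewrite e eqxx in hl0.
Qed.

Lemma rE i x : r (ev i) x = if x == sel i then r (ev i) (sel i) else 0.
Proof.
case: eqP => [->|h] //; apply/eqP; apply: NNPP => hh; apply: h; apply: single; exact/negP.
Qed.

Lemma eps_norm i : `|r (ev i) (sel i)| = 1.
Proof.
have h1 := (Hr (ev i)).2.
have h2 : rlim (fun N => \sum_(x <- box N) nr (r (ev i) x)) (nr (r (ev i) (sel i))).
  move=> e e0; exists (\sum_j sel i j).+1 => N hN.
  rewrite (eq_bigr (fun x => if x == sel i then nr (r (ev i) (sel i)) else 0)).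
    by rewrite sum_pt ?subrr ?normr0 // (box_mono hN) // box_self.
  by move=> x _; rewrite rE; case: eqP; rewrite ?nr0.
by rewrite normE (rlim_unique h2 h1).
Qed.

Lemma mono_ev (w : 'I_k -> C) i : mono w (ev i) = w i.
Proof.
rewrite /mono (bigD1 i) //= big1 ?mulr1; first by rewrite ffunE eqxx expr1.
by move=> j hj; rewrite ffunE (negPf hj) expr0.
Qed.

Lemma formula z (hz : open_polydisc z) i :
  phi z i = r (ev i) (sel i) * \prod_(j < k) z j ^+ (\matrix_(i, j) sel i j) i j.
Proof.
have hz' : forall j, nr (z j) < 1 by move=> j; rewrite -nr_lt1.
have H := (Hr (ev i)).1.2 z hz'; rewrite mono_ev in H.
have e : (fun x => r (ev i) x * mono z x) =
    (fun x => if x == sel i then r (ev i) (sel i) * mono z (sel i) else 0).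
  by apply: functional_extensionality => x; rewrite rE; case: eqP => [->|_]; rewrite ?mul0r.
rewrite e in H; rewrite (hs_unique H (hs_pt _ _)) /mono.
by congr (_ * _); apply: eq_bigr => j _; rewrite mxE.
Qed.

End OnlyIf.

Local Close Scope complex_scope.

Theorem theorem17 (R : realType) (k : nat)
    (phi : ('I_k -> R[i]) -> ('I_k -> R[i])) :
  (0 < k)%N ->
  (forall z, open_polydisc z -> closed_polydisc (phi z)) ->
  (forall i : 'I_k, analytic_on_polydisc (fun z => phi z i)) ->
  Cphi_maps_Aplus phi ->
  (Cphi_isometry phi <->
   exists (A : 'M[nat]_k) (eps : 'I_k -> R[i]),
     \det (map_mx (fun n : nat => n%:Z) A) != 0 /\
     (forall i, `|eps i| = 1) /\
     (forall z, open_polydisc z -> forall i : 'I_k,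
        phi z i = eps i * \prod_(j < k) z j ^+ A i j)).
Proof.
move=> hk _ _ Hmap; split.
- move=> Hiso.
  have [r Hr] := rep_choice Hmap Hiso.
  have [sel Hsel] : exists sel : 'I_k -> {ffun 'I_k -> nat}, forall i, r (ev i) (sel i) != 0.
    exists (fun i => proj1_sig (constructive_indefinite_description _ (nonempty Hr (ev i)))).
    move=> i; exact: (proj2_sig (constructive_indefinite_description _ (nonempty Hr (ev i)))).
  exists (\matrix_(i, j) sel i j), (fun i => r (ev i) (sel i)); split; [|split].
  + exact: (det_nz Hmap Hiso Hr Hsel).
  + move=> i; exact: (eps_norm Hmap Hiso Hr Hsel).
  + move=> z hz i; exact: (formula Hmap Hiso Hr Hsel hz).
- case=> A [eps [hdet [heps hphi]]]; exact: (if_dir hdet heps hphi).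
Qed.
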